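(* Let $p\in[1,\infty]$ and let $(X,d,\mu)$ be a metric measure space which is $p$-thick quasiconvex with constant $C\ge1$. Then $d_p$ is a metric on $X$ and $d\le d_p\le Cd$.
   Context: A metric measure space is a proper metric space with a Borel regular outer measure positive and finite on balls. $\operatorname{Mod}_p\Gamma=\inf\int\rho^pd\mu$ (for $p<\infty$), $\operatorname{Mod}_\infty\Gamma=\inf\|\rho\|_{L^\infty}$, over Borel $\rho\ge0$ with $\int_\gamma\rho\ge1$ on $\Gamma$. $\Gamma(E,F;C)$ is the family of curves $\gamma:[0,1]\to X$ with $\gamma(0)\in E,\gamma(1)\in F,\ell(\gamma)\le Cd(\gamma(0),\gamma(1))$; $X$ is $p$-thick quasiconvex with constant $C$ if $\operatorname{Mod}_p\Gamma(E,F;C)>0$ for all measurable $E,F$ of positive measure. With $\Gamma(E,F)$ the Lipschitz curves $[0,1]\to X$ from $E$ to $F$, set $ess\ell_p(\Gamma):=\sup_{\operatorname{Mod}_p\Gamma_0=0}\inf\{\ell(\gamma):\gamma\in\Gamma\setminus\Gamma_0\}$ ($\inf\emptyset=\infty$), $d_p'(x,y):=\lim_{\delta\to0}ess\ell_p\Gamma(\bar B(x,\delta),\bar B(y,\delta))$, and $d_p(x,y):=\inf\{\sum_{i=1}^nd_p'(x_{i-1},x_i):n\in\mathbb N,x_0=x,x_n=y\}$. *)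

(* Defs.v *)
From HB Require Import structures.
From mathcomp Require Import all_boot all_order all_algebra.
From mathcomp Require Import all_classical all_reals all_analysis measurable_realfun ess_sup_inf.
Set Implicit Arguments. Unset Strict Implicit. Unset Printing Implicit Defensive.
Import Order.TTheory GRing.Theory Num.Theory.
Import numFieldNormedType.Exports.
Local Open Scope classical_set_scope.
Local Open Scope ring_scope.

Section defs.
Context {R : realType} {X : pointedType}.
Variable dist : X -> X -> R.

Definition is_metric : Prop :=
  [/\ (forall x y, 0 <= dist x y),
      (forall x y, dist x y = 0 <-> x = y),
      (forall x y, dist x y = dist y x) &
      (forall x y z, dist x z <= dist x y + dist y z)].

Definition ball_d (x : X) (r : R) : set X := [set y | dist x y < r].
Definition cball_d (x : X) (r : R) : set X := [set y | dist x y <= r].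

Definition open_d (U : set X) : Prop :=
  forall x, U x -> exists2 r : R, 0 < r & ball_d x r `<=` U.

Definition borel_d : set (set X) := <<s [set U | open_d U] >>.

Definition compact_d (K : set X) : Prop :=
  forall G : set (set X), (forall U, G U -> open_d U) ->
    K `<=` \bigcup_(U in G) U ->
    exists2 F : set (set X), finite_set F & F `<=` G /\ K `<=` \bigcup_(U in F) U.

Definition proper_d : Prop := forall x r, compact_d (cball_d x r).

Definition borel_fun (f : X -> \bar R) : Prop :=
  forall B : set (\bar R), measurable B -> borel_d (f @^-1` B).

Variable mu : {outer_measure set X -> \bar R}.

Definition borel_regular : Prop :=
  (forall B, borel_d B -> mu.-caratheodory B) /\
  (forall A : set X, exists B, [/\ borel_d B, A `<=` B & mu A = mu B]).

Definition metric_measure_space : Prop :=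
  [/\ is_metric, proper_d, borel_regular &
      (forall x r, 0 < r -> (0 < mu (ball_d x r) < +oo)%E)].

(** * Curves.  A curve [gamma : [0,1] -> X] is represented by a function
    [R -> X] of which only the values on [0,1] matter. *)
Definition curve (g : R -> X) : Prop :=
  forall t, 0 <= t <= 1 -> forall e, 0 < e -> exists2 del, 0 < del &
    forall s, 0 <= s <= 1 -> `|s - t| < del -> dist (g s) (g t) < e.

Definition lipschitz_curve (g : R -> X) : Prop :=
  exists L : R, forall s t, 0 <= s <= 1 -> 0 <= t <= 1 ->
    dist (g s) (g t) <= L * `|s - t|.

Definition len_on (g : R -> X) (a b : R) : \bar R :=
  ereal_sup [set v | exists (n : nat) (t : nat -> R),
    [/\ t 0%N = a, t n = b, (forall i, (i < n)%N -> t i <= t i.+1) &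
        v = (\sum_(i < n) dist (g (t i)) (g (t i.+1)))%:E]].

Definition len (g : R -> X) : \bar R := len_on g 0 1.

(** arc-length parametrization [g_s : [0, len g] -> X], g_s (s_g t) = g t *)
Definition arcpar (g : R -> X) (s : R) : X :=
  g (xget 0 [set t | 0 <= t <= 1 /\ len_on g 0 t = s%:E]).

Definition line_int (g : R -> X) (rho : X -> \bar R) : \bar R :=
  (\int[@lebesgue_measure R]_(s in `[0%R, fine (len g)]) rho (arcpar g s))%E.

Definition admissible (Gam : set (R -> X)) (rho : X -> \bar R) : Prop :=
  [/\ (forall x, (0 <= rho x)%E), borel_fun rho &
      (forall g, Gam g -> (1 <= line_int g rho)%E)].

Definition Mod (p : \bar R) (Gam : set (R -> X)) : \bar R :=
  ereal_inf [set m | exists rho, admissible Gam rho /\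
    m = if p == +oo%E then ess_sup (mu : set (caratheodory_type mu) -> \bar R) rho
        else (\int[mu : set (caratheodory_type mu) -> \bar R]_x (rho x `^ fine p))%E].

Definition GamC (E F : set X) (C : R) : set (R -> X) :=
  [set g | [/\ curve g, E (g 0), F (g 1) & (len g <= (C * dist (g 0) (g 1))%:E)%E]].

Definition GamL (E F : set X) : set (R -> X) :=
  [set g | [/\ lipschitz_curve g, E (g 0) & F (g 1)]].

Definition thick_quasiconvex (p : \bar R) (C : R) : Prop :=
  forall E F : set X, mu.-caratheodory E -> mu.-caratheodory F ->
    (0 < mu E)%E -> (0 < mu F)%E -> (0 < Mod p (GamC E F C))%E.

Definition essl (p : \bar R) (Gam : set (R -> X)) : \bar R :=
  ereal_sup [set v | exists Gam0 : set (R -> X), Mod p Gam0 = 0%E /\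
    v = ereal_inf [set len g | g in Gam `\` Gam0]].

Definition dp' (p : \bar R) (x y : X) : \bar R :=
  lim ((fun del : R => essl p (GamL (cball_d x del) (cball_d y del))) @ 0^'+).

Definition dp (p : \bar R) (x y : X) : \bar R :=
  ereal_inf [set v | exists (n : nat) (xs : nat -> X),
    [/\ (0 < n)%N, xs 0%N = x, xs n = y &
        v = (\sum_(i < n) dp' p (xs i) (xs i.+1))%E]].

End defs.

Definition is_metric_e {R : realType} {X : Type} (f : X -> X -> \bar R) : Prop :=
  [/\ (forall x y, f x y \is a fin_num),
      (forall x y, (0 <= f x y)%E),
      (forall x y, f x y = 0%E <-> x = y),
      (forall x y, f x y = f y x) &
      (forall x y z, (f x z <= f x y + f y z)%E)].

(* Main.v *)
Require Import Defs.
From HB Require Import structures.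
From mathcomp Require Import all_boot all_order all_algebra.
From mathcomp Require Import all_classical all_reals all_analysis measurable_realfun ess_sup_inf.
From mathcomp Require Import lra ring.
Import Order.TTheory GRing.Theory Num.Theory.
Import numFieldNormedType.Exports.
Local Open Scope classical_set_scope.
Local Open Scope ring_scope.
Set Implicit Arguments. Unset Strict Implicit. Unset Printing Implicit Defensive.

Section Len.
Context {R : realType} {X : pointedType} (dist : X -> X -> R).
Hypothesis d0 : forall x y, 0 <= dist x y.
Hypothesis dsym : forall x y, dist x y = dist y x.
Hypothesis dtri : forall x y z, dist x z <= dist x y + dist y z.
Hypothesis dxx : forall x, dist x x = 0.

Fixpoint plen (g : R -> X) (a : R) (s : seq R) : R :=
  match s with [::] => 0 | b :: s' => dist (g a) (g b) + plen g b s' end.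

Definition parts (a b : R) := [set s : seq R | path <=%R a s /\ last a s = b].

Definition lenL g a b := ereal_sup [set (plen g a s)%:E | s in parts a b].

Lemma plen_sum g x0 a s : plen g a s =
  \sum_(i < size s) dist (g (nth x0 (a :: s) i)) (g (nth x0 (a :: s) i.+1)).
Proof.
elim: s a => [|y s IH] a /=; first by rewrite big_ord0.
by rewrite big_ord_recl /= IH.
Qed.

Lemma plen_iota g (t : nat -> R) n m :
  plen g (t m) [seq t i | i <- iota m.+1 n] =
  \sum_(m <= i < (m + n)%N) dist (g (t i)) (g (t i.+1)).
Proof.
elim: n m => [|n IH] m /=; first by rewrite ?addn0 big_geq.
by rewrite IH big_ltn ?addnS ?ltnS ?leq_addr // addSn.
Qed.

Lemma path_iota (t : nat -> R) n m :
  (forall i, (i < (m + n)%N)%N -> t i <= t i.+1) ->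
  path <=%R (t m) [seq t i | i <- iota m.+1 n].
Proof.
elim: n m => [|n IH] m tm //=.
rewrite tm ?addnS ?ltnS ?leq_addr //=; apply: IH => i; rewrite addSn -addnS; exact: tm.
Qed.

Lemma last_iota (t : nat -> R) n m :
  last (t m) [seq t i | i <- iota m.+1 n] = t (m + n)%N.
Proof.
elim: n m => [|n IH] m /=; first by rewrite ?addn0.
by rewrite IH addSnnS.
Qed.

Lemma len_onE g a b : len_on dist g a b = lenL g a b.
Proof.
rewrite /len_on /lenL; congr ereal_sup; apply/seteqP; split => v.
  move=> [n [t [t0 tn tm ->]]].
  exists [seq t i | i <- iota 1 n].
    split; first by rewrite -t0; apply: path_iota.
    by rewrite -t0 last_iota add0n.
  by rewrite -t0 plen_iota big_mkord.
move=> [s [ps ls] <-]; exists (size s), (fun i => nth a (a :: s) i); split => //.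
- by rewrite -last_nth.
- by move=> i ilt; move/(pathP a): ps => /(_ i ilt).
- by rewrite (plen_sum _ a).
Qed.

Lemma plen_ge0 g a s : 0 <= plen g a s.
Proof. by elim: s a => [|y s IH] a //=; rewrite addr_ge0. Qed.

Lemma plen_dist g a s : dist (g a) (g (last a s)) <= plen g a s.
Proof.
elim: s a => [|y s IH] a /=; first by rewrite dxx.
by rewrite (le_trans (dtri _ (g y) _)) // lerD2l.
Qed.

Lemma plen_cat g a s1 s2 :
  plen g a (s1 ++ s2) = plen g a s1 + plen g (last a s1) s2.
Proof. by elim: s1 a => [|y s IH] a /=; rewrite ?add0r // IH addrA. Qed.

Lemma plen_map g h a s :
  plen g (h a) [seq h u | u <- s] = plen (g \o h) a s.
Proof. by elim: s a => [|y s IH] a //=; rewrite IH. Qed.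

Lemma plen_eq g1 g2 a s : (forall u, u \in a :: s -> g1 u = g2 u) ->
  plen g1 a s = plen g2 a s.
Proof.
elim: s a => [|y s IH] a //= H.
rewrite !H ?inE ?eqxx ?orbT // IH // => u us; apply: H.
by rewrite inE us orbT.
Qed.

Lemma last_rev_belast (x : R) s : last (last x s) (rev (belast x s)) = x.
Proof.
elim/last_ind: s => [|s y _] //=.
by rewrite last_rcons belast_rcons rev_cons last_rcons.
Qed.

Lemma plen_rev g a s : plen g a s = plen g (last a s) (rev (belast a s)).
Proof.
elim: s a => [|y s IH] a //=.
rewrite rev_cons -cats1 plen_cat /= IH addr0 last_rev_belast addrC.
by rewrite dsym.
Qed.


Lemma path_le_last (a : R) s : path <=%R a s -> a <= last a s.
Proof.
elim: s a => [|y s IH] a //= /andP[ay py].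
exact: le_trans ay (IH _ py).
Qed.

Lemma path_bounds (a : R) s : path <=%R a s -> forall u, u \in s -> a <= u <= last a s.
Proof.
elim: s a => [|y s IH] a //= /andP[ay py] u; rewrite inE => /orP[/eqP ->|us].
  by rewrite ay path_le_last.
by have /andP[yu ->] := IH _ py _ us; rewrite (le_trans ay yu).
Qed.

Lemma plen_split g (m a : R) s : path <=%R a s -> a <= m -> m <= last a s ->
  exists s1 s2, [/\ parts a m s1, parts m (last a s) s2 &
    plen g a s <= plen g a s1 + plen g m s2].
Proof.
elim: s a => [|y s IH] a /=.
  move=> _ am ma; have -> : m = a by apply/eqP; rewrite eq_le ma am.
  by exists [::], [::]; split => //=; rewrite addr0.
move=> /andP[ay py] am mlast.
have [my|ym] := leP m y.
  exists [:: m], (y :: s); split.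
  - by split => //=; rewrite am.
  - by split => //=; rewrite my py.
  - by rewrite /= addr0 addrA lerD2r dtri.
have [s1 [s2 [[p1 l1] p2 le]]] := IH _ py (ltW ym) mlast.
exists (y :: s1), s2; split => //.
- by split => //=; rewrite ay p1.
- by rewrite /= -addrA lerD2l.
Qed.

Lemma parts_cat (a m b : R) s1 s2 : parts a m s1 -> parts m b s2 -> parts a b (s1 ++ s2).
Proof.
move=> [p1 l1] [p2 l2]; split; first by rewrite cat_path p1 l1 p2.
by rewrite last_cat l1.
Qed.

Lemma parts_single (a b : R) : a <= b -> parts a b [:: b].
Proof. by move=> ab; split => //=; rewrite ab. Qed.

Local Open Scope ereal_scope.

Lemma lenL_ge_plen g a b s : parts a b s -> (plen g a s)%:E <= lenL g a b.
Proof. by move=> ps; apply: ereal_sup_ubound; exists s. Qed.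

Lemma lenL_dist g a b : (a <= b)%R -> (dist (g a) (g b))%:E <= lenL g a b.
Proof.
move=> ab; apply: le_trans (lenL_ge_plen g (parts_single ab)).
by rewrite /= addr0.
Qed.

Lemma lenL_ge0 g a b : (a <= b)%R -> 0 <= lenL g a b.
Proof. by move=> ab; apply: le_trans (lenL_dist g ab); rewrite lee_fin. Qed.

Lemma sup_add_le (A B : set R) (c : \bar R) :
  A !=set0 -> B !=set0 -> (forall x y, A x -> B y -> (x + y)%:E <= c) ->
  ereal_sup (EFin @` A) + ereal_sup (EFin @` B) <= c.
Proof.
move=> [x0 Ax0] [y0 By0] H.
case: c H => [r| |] H; last 2 first.
- by rewrite leey.
- by have := H _ _ Ax0 By0.
have supA : forall y, B y -> ereal_sup (EFin @` A) <= (r - y)%:E.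
  move=> y By; apply: ge_ereal_sup => _ [x Ax <-]; rewrite lee_fin lerBrDr.
  by have := H _ _ Ax By; rewrite lee_fin.
have supA0 : x0%:E <= ereal_sup (EFin @` A) by apply: ereal_sup_ubound; exists x0.
have : ereal_sup (EFin @` A) \is a fin_num.
  by rewrite fin_numElt (lt_le_trans _ supA0) ?ltNyr // (le_lt_trans (supA _ By0)) ?ltry.
move: supA supA0; case: (ereal_sup _) => // sA supA _ _.
have supB : ereal_sup (EFin @` B) <= (r - sA)%:E.
  apply: ge_ereal_sup => _ [y By <-]; rewrite lee_fin lerBrDl.
  by have := supA _ By; rewrite lee_fin lerBrDr addrC.
by rewrite (le_trans (leeD2l _ supB)) // -EFinD lee_fin addrC subrK.
Qed.

Lemma parts_nonempty (a b : R) : (a <= b)%R -> parts a b !=set0.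
Proof. by move=> ab; exists [:: b]; exact: parts_single. Qed.

Lemma lenL_add g a m b : (a <= m)%R -> (m <= b)%R ->
  lenL g a b = lenL g a m + lenL g m b.
Proof.
move=> am mb; apply/eqP; rewrite eq_le; apply/andP; split.
  apply: ge_ereal_sup => _ [s [ps ls] <-].
  have mls : (m <= last a s)%R by rewrite ls.
  have [s1 [s2 [p1 p2 le]]] := plen_split g ps am mls.
  rewrite ls in p2.
  apply: le_trans (leeD (lenL_ge_plen g p1) (lenL_ge_plen g p2)).
  by rewrite -EFinD lee_fin.
rewrite /lenL -(image_comp (plen g a) EFin) -(image_comp (plen g m) EFin).
apply: sup_add_le.
- by have [s ps] := parts_nonempty am; exists (plen g a s), s.
- by have [s ps] := parts_nonempty mb; exists (plen g m s), s.
move=> _ _ [s1 p1 <-] [s2 p2 <-].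
apply: le_trans (lenL_ge_plen g (parts_cat p1 p2)).
by rewrite plen_cat (proj2 p1).
Qed.

Lemma lenL_aa g a : lenL g a a = 0.
Proof.
apply/eqP; rewrite eq_le lenL_ge0 // andbT; apply: ge_ereal_sup => _ [s [ps ls] <-].
rewrite lee_fin.
suff -> : plen g a s = 0%R by [].
elim: s ps ls => [|y s IH] //= /andP[ay py] ly.
have ya : y = a by apply/eqP; rewrite eq_le ay andbT -[X in (_ <= X)%R]ly path_le_last.
by rewrite ya in py ly *; rewrite dxx add0r IH.
Qed.

Lemma plen_lip g K lo hi :
  (forall u v, (lo <= u)%R -> (u <= v)%R -> (v <= hi)%R -> (dist (g u) (g v) <= K * (v - u))%R) ->
  forall a s, (lo <= a)%R -> path <=%R a s -> (last a s <= hi)%R ->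
  (plen g a s <= K * (last a s - a))%R.
Proof.
move=> H a s; elim: s a => [|y s IH] a /= loa; first by rewrite subrr mulr0.
move=> /andP[ay py] lhi; have yl := path_le_last py.
rewrite (le_trans (lerD (H a y loa ay (le_trans yl lhi)) (IH y (le_trans loa ay) py lhi))) //.
by rewrite -mulrDr addrC addrA subrK.
Qed.

Lemma lenL_lip g K a b : (a <= b)%R ->
  (forall u v, (a <= u)%R -> (u <= v)%R -> (v <= b)%R -> (dist (g u) (g v) <= K * (v - u))%R) ->
  lenL g a b <= (K * (b - a))%:E.
Proof.
move=> ab H; apply: ge_ereal_sup => _ [s [ps ls] <-]; rewrite lee_fin.
have lb : (last a s <= b)%R by rewrite ls.
by have := plen_lip H (lexx a) ps lb; rewrite ls.
Qed.

Definition revc (g : R -> X) := fun t : R => g (1 - t)%R.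

Lemma path_map_rev (x : R) p : path (fun z y => (y <= z)%R) x p ->
  path <=%R (1 - x)%R [seq (1 - u)%R | u <- p].
Proof.
elim: p x => [|y p IH] x //= /andP[yx py].
by rewrite lerD2l lerN2 yx IH.
Qed.

Lemma lenL_rev_le g a b : lenL (revc g) a b <= lenL g (1 - b)%R (1 - a)%R.
Proof.
apply: ge_ereal_sup => _ [s [ps ls] <-].
set h := fun u : R => (1 - u)%R.
set s' := [seq h u | u <- rev (belast a s)].
have Hp : parts (1 - b)%R (1 - a)%R s'.
  split.
    rewrite -ls /s' /h; apply: path_map_rev; rewrite rev_path; exact: ps.
  by rewrite -ls /s' (last_map h) last_rev_belast.
apply: le_trans (lenL_ge_plen g Hp); rewrite lee_fin le_eqVlt; apply/orP; left; apply/eqP.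
have -> : revc g = g \o h by [].
rewrite -plen_map plen_rev (last_map h) (belast_map h) -map_rev ls.
by [].
Qed.

Lemma revcK g : revc (revc g) = g.
Proof. by apply/funext => t; rewrite /revc subKr. Qed.

Lemma lenL_rev g a b : lenL (revc g) a b = lenL g (1 - b)%R (1 - a)%R.
Proof.
apply/eqP; rewrite eq_le lenL_rev_le /=.
by have := lenL_rev_le (revc g) (1 - b)%R (1 - a)%R; rewrite !subKr revcK.
Qed.

End Len.

Section Cont.
Context {R : realType} {X : pointedType} (dist : X -> X -> R).
Hypothesis d0 : forall x y, 0 <= dist x y.
Hypothesis dsym : forall x y, dist x y = dist y x.
Hypothesis dtri : forall x y z, dist x z <= dist x y + dist y z.
Hypothesis dxx : forall x, dist x x = 0.
Hypothesis deq : forall x y, dist x y = 0 -> x = y.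

Local Notation plen := (plen dist).
Local Notation lenL := (lenL dist).
Local Notation parts := (@parts R).
Let Ladd := @lenL_add R X dist dtri.
Let Lge0 := @lenL_ge0 R X dist d0.
Let Laa := @lenL_aa R X dist d0 dxx.
Let Lrev := @lenL_rev R X dist dsym.
Let Lpd := @plen_dist R X dist dtri dxx.

Lemma right_cut g (t0 : R) s : path <=%R t0 s ->
  exists2 del : R, 0 < del & forall t, t0 <= t -> t < t0 + del -> t <= last t0 s ->
  exists2 s2, parts t (last t0 s) s2 & plen g t0 s <= dist (g t0) (g t) + plen g t s2.
Proof.
elim: s => [|y s IH] /=.
  move=> _; exists 1 => // t t0t _ tt0.
  have -> : t = t0 by apply/eqP; rewrite eq_le tt0 t0t.
  by exists [::]; [split | rewrite /= addr0 d0].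
move=> /andP[t0y py].
have [yt0|t0y'] := leP y t0.
  have ey : y = t0 by apply/eqP; rewrite eq_le yt0 t0y.
  rewrite ey in py *; have [del del0 H] := IH py.
  by exists del => // t a b c; rewrite dxx add0r; exact: H.
exists (y - t0); first by rewrite subr_gt0.
move=> t t0t tlt _; rewrite addrC subrK in tlt; exists (y :: s).
  by split => //=; rewrite py andbT ltW.
rewrite /= addrA lerD2r; exact: dtri.
Qed.

Lemma sum_fin (x y : \bar R) m : (0 <= x)%E -> (0 <= y)%E -> (x + y = m%:E)%E ->
  exists a b, [/\ x = a%:E, y = b%:E & a + b = m].
Proof.
case: x => [a| |]; case: y => [b| |] //= _ _ [<-].
by exists a, b.
Qed.

Lemma lenL_fin g L a b : 0 <= a -> a <= b -> b <= 1 -> lenL g 0 1 = L%:E ->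
  exists l, [/\ lenL g a b = l%:E, 0 <= l & l <= L].
Proof.
move=> a0 ab b1 HL.
have := Ladd g a0 (le_trans ab b1); rewrite HL.
move/esym=> /(sum_fin (Lge0 g a0) (Lge0 g (le_trans ab b1))) [c [r [Ec Er cr]]].
have := Ladd g ab b1; rewrite Er.
move/esym=> /(sum_fin (Lge0 g ab) (Lge0 g b1)) [l [k [El Ek lk]]].
have c0 : 0 <= c by have := Lge0 g a0; rewrite Ec lee_fin.
have l0 : 0 <= l by have := Lge0 g ab; rewrite El lee_fin.
have k0 : 0 <= k by have := Lge0 g b1; rewrite Ek lee_fin.
exists l; split => //; lra.
Qed.

Lemma right_cont g L t0 : curve dist g -> lenL g 0 1 = L%:E -> 0 <= t0 -> t0 <= 1 ->
  forall e, 0 < e -> exists2 del, 0 < del & forall t, t0 <= t -> t < t0 + del -> t <= 1 ->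
  (lenL g t0 t <= e%:E)%E.
Proof.
move=> cg HL t00 t01 e e0.
have [m [Em m0 mL]] := lenL_fin t00 t01 (lexx 1) HL.
have e2 : 0 < e / 2 by rewrite divr_gt0.
have : ((m - e / 2)%:E < lenL g t0 1)%E by rewrite Em lte_fin; lra.
move/ereal_sup_gt => [_ [s [ps ls] <-]]; rewrite lte_fin => hs.
have t0I : 0 <= t0 <= 1 by rewrite t00 t01.
have [d1 d10 Hd1] := cg t0 t0I _ e2.
have [d2 d20 Hd2] := right_cut g ps.
exists (Num.min d1 d2); first by rewrite lt_min d10 d20.
move=> t t0t tlt t1.
have md1 : Num.min d1 d2 <= d1 by rewrite ge_min lexx.
have md2 : Num.min d1 d2 <= d2 by rewrite ge_min lexx orbT.
have tl : t <= last t0 s by rewrite ls.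
have hd2 : t < t0 + d2 by apply: lt_le_trans tlt _; rewrite lerD2l.
have hd1 : `|t - t0| < d1.
  by rewrite ger0_norm ?subr_ge0 // ltrBlDl; apply: lt_le_trans tlt _; rewrite lerD2l.
have tI : 0 <= t <= 1 by rewrite t1 (le_trans t00 t0t).
have dt := Hd1 t tI hd1.
have [s2 p2 hle] := Hd2 t t0t hd2 tl.
rewrite ls in p2.
have := lenL_ge_plen dist g p2.
have [a [Ea a0 aL]] := lenL_fin t00 t0t t1 HL.
have [b [Eb b0 bL]] := lenL_fin (le_trans t00 t0t) t1 (lexx 1) HL.
have := Ladd g t0t t1; rewrite Em Ea Eb -EFinD => -[mab].
rewrite lee_fin => pb; rewrite lee_fin.
rewrite dsym in dt.
lra.
Qed.

Lemma curve_rev g : curve dist g -> curve dist (revc g).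
Proof.
move=> cg t /andP[t0 t1] e e0.
have t'I : 0 <= 1 - t <= 1 by apply/andP; split; lra.
have [del del0 H] := cg (1 - t) t'I e e0.
exists del => // s /andP[s0 s1] st; rewrite /revc.
apply: H; first by apply/andP; split; lra.
have -> : 1 - s - (1 - t) = t - s by ring.
by rewrite distrC.
Qed.

Lemma left_cont g L t0 : curve dist g -> lenL g 0 1 = L%:E -> 0 <= t0 -> t0 <= 1 ->
  forall e, 0 < e -> exists2 del, 0 < del & forall t, t <= t0 -> t0 - del < t -> 0 <= t ->
  (lenL g t t0 <= e%:E)%E.
Proof.
move=> cg HL t00 t01 e e0.
have HL' : lenL (revc g) 0 1 = L%:E by rewrite Lrev subrr subr0.
have a0 : 0 <= 1 - t0 by lra.
have a1 : 1 - t0 <= 1 by lra.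
have [del del0 H] := right_cont (curve_rev cg) HL' a0 a1 e0.
exists del => // t tt0 tlt t0'.
have := H (1 - t); rewrite Lrev !subKr; apply; lra.
Qed.

Definition ell g t := fine (lenL g 0 t).

Lemma ell_diff g L a b : 0 <= a -> a <= b -> b <= 1 -> lenL g 0 1 = L%:E ->
  lenL g a b = (ell g b - ell g a)%:E.
Proof.
move=> a0 ab b1 HL.
have [x [Ex _ _]] := lenL_fin (lexx 0) a0 (le_trans ab b1) HL.
have [y [Ey _ _]] := lenL_fin (lexx 0) (le_trans a0 ab) b1 HL.
have [z [Ez _ _]] := lenL_fin a0 ab b1 HL.
have := Ladd g a0 ab; rewrite Ex Ey Ez -EFinD => -[yE].
by rewrite /ell Ex Ey /= yE; congr EFin; ring.
Qed.

Lemma ell_cont g L t0 : curve dist g -> lenL g 0 1 = L%:E -> 0 <= t0 -> t0 <= 1 ->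
  forall e, 0 < e -> exists2 del, 0 < del & forall t, 0 <= t -> t <= 1 ->
  `|t - t0| < del -> `|ell g t - ell g t0| <= e.
Proof.
move=> cg HL t00 t01 e e0.
have [d1 d10 H1] := right_cont cg HL t00 t01 e0.
have [d2 d20 H2] := left_cont cg HL t00 t01 e0.
exists (Num.min d1 d2); first by rewrite lt_min d10 d20.
move=> t t0' t1 tt.
have md1 : Num.min d1 d2 <= d1 by rewrite ge_min lexx.
have md2 : Num.min d1 d2 <= d2 by rewrite ge_min lexx orbT.
move: tt; rewrite ltr_norml => /andP[ta tb].
have [tt0|t0t] := leP t t0.
  have := H2 t tt0 ltac:(lra) t0'.
  rewrite (ell_diff t0' tt0 t01 HL) lee_fin => h.
  have h0 : 0 <= ell g t0 - ell g t.
    by have := Lge0 g tt0; rewrite (ell_diff t0' tt0 t01 HL) lee_fin.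
  rewrite ler_norml; apply/andP; split; lra.
have t0t' := ltW t0t.
have := H1 t t0t' ltac:(lra) t1.
rewrite (ell_diff t00 t0t' t1 HL) lee_fin => h.
have h0 : 0 <= ell g t - ell g t0.
  by have := Lge0 g t0t'; rewrite (ell_diff t00 t0t' t1 HL) lee_fin.
rewrite ler_norml; apply/andP; split; lra.
Qed.

Definition cl (t : R) := if t <= 0 then 0 else if 1 <= t then 1 else t.

Lemma cl_cases u : (cl u = 0 /\ u <= 0) \/ (cl u = u /\ 0 <= u <= 1) \/ (cl u = 1 /\ 1 <= u).
Proof.
rewrite /cl; case: ifP => u0; first by left.
case: ifP => u1; first by right; right.
right; left; split => //; move/negbT: u0; move/negbT: u1.
by rewrite -!ltNge => ? ?; rewrite !ltW.
Qed.

Lemma cl_in t : 0 <= cl t <= 1.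
Proof. by case: (cl_cases t) => [[-> _]|[[-> ->]|[-> _]]] //; rewrite ler01 lexx. Qed.

Lemma cl_id t : 0 <= t -> t <= 1 -> cl t = t.
Proof. by move=> t0 t1; case: (cl_cases t) => [[-> ?]|[[-> _]|[-> ?]]] //; lra. Qed.

Lemma cl_lip t s d : `|t - s| < d -> `|cl t - cl s| < d.
Proof.
rewrite !ltr_norml => /andP[h1 h2].
case: (cl_cases t) => [[-> ?]|[[-> /andP[? ?]]|[-> ?]]];
case: (cl_cases s) => [[-> ?]|[[-> /andP[? ?]]|[-> ?]]]; apply/andP; split; lra.
Qed.

Lemma ell_ivt g L v : curve dist g -> lenL g 0 1 = L%:E -> 0 <= v -> v <= L ->
  exists t, [/\ 0 <= t, t <= 1 & lenL g 0 t = v%:E].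
Proof.
move=> cg HL v0 vL.
have fc : continuous (ell g \o cl).
  move=> x; apply/cvgrPdist_le => e e0; apply/nbhs_normP.
  have /andP[c0 c1] := cl_in x.
  have [del del0 H] := ell_cont cg HL c0 c1 e0.
  exists del => // t /= xt.
  have /andP[ct0 ct1] := cl_in t.
  rewrite distrC; apply: H => //; apply: cl_lip.
  by rewrite distrC.
have f0 : (ell g \o cl) 0 = 0 by rewrite /= cl_id ?ler01 // /ell Laa.
have f1 : (ell g \o cl) 1 = L by rewrite /= cl_id ?ler01 // /ell HL.
have L0 : 0 <= L by lra.
have := @IVT R (ell g \o cl) 0 1 v ler01 (continuous_subspaceT fc).
rewrite f0 f1 (min_l L0) (max_r L0) v0 vL => /(_ isT) [c].
rewrite in_itv /= => /andP[c0 c1]; rewrite /= cl_id // => cv.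
exists c; split => //.
have [l [El _ _]] := lenL_fin (lexx 0) c0 c1 HL.
by rewrite El -cv /ell El.
Qed.


Lemma arcparE g s : arcpar dist g s =
  g (xget 0 [set t | 0 <= t <= 1 /\ lenL g 0 t = s%:E]).
Proof.
rewrite /arcpar; congr (g (xget 0 _)); apply/funext => t.
rewrite /=; by rewrite len_onE.
Qed.

Lemma same_len_eq g L t1 t2 : lenL g 0 1 = L%:E -> 0 <= t1 -> t1 <= 1 -> 0 <= t2 -> t2 <= 1 ->
  lenL g 0 t1 = lenL g 0 t2 -> g t1 = g t2.
Proof.
move=> HL.
have key : forall u v, 0 <= u -> u <= v -> v <= 1 -> lenL g 0 u = lenL g 0 v -> g u = g v.
  move=> u v u0 uv v1 E; apply: deq; apply/eqP; rewrite eq_le d0 andbT.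
  by have := lenL_dist dist g uv; rewrite (ell_diff u0 uv v1 HL) /ell E subrr lee_fin.
move=> a0 a1 b0 b1 E; have [h|h] := leP t1 t2; first exact: key.
by apply/esym/key => //; exact: ltW.
Qed.

Lemma arcpar_eq g L s t : lenL g 0 1 = L%:E -> 0 <= t -> t <= 1 ->
  lenL g 0 t = s%:E -> arcpar dist g s = g t.
Proof.
move=> HL t0 t1 Et; rewrite arcparE.
set P := [set t | _]; have : P (xget 0 P) by apply: xgetPex; exists t; rewrite /P /= t0 t1.
rewrite /P /= => -[/andP[u0 u1] Eu].
by apply: (same_len_eq HL) => //; rewrite Eu Et.
Qed.

Lemma arcpar_lip g L s1 s2 : curve dist g -> lenL g 0 1 = L%:E ->
  0 <= s1 -> s1 <= L -> 0 <= s2 -> s2 <= L ->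
  dist (arcpar dist g s1) (arcpar dist g s2) <= `|s1 - s2|.
Proof.
move=> cg HL a0 a1 b0 b1.
have [t1 [t10 t11 E1]] := ell_ivt cg HL a0 a1.
have [t2 [t20 t21 E2]] := ell_ivt cg HL b0 b1.
rewrite (arcpar_eq HL t10 t11 E1) (arcpar_eq HL t20 t21 E2).
wlog t12 : s1 s2 t1 t2 a0 a1 b0 b1 t10 t11 E1 t20 t21 E2 / t1 <= t2.
  move=> W; have [h|h] := leP t1 t2; first exact: (W s1 s2).
  by rewrite dsym distrC; apply: (W s2 s1) => //; exact: ltW.
have := lenL_dist dist g t12; rewrite (ell_diff t10 t12 t21 HL) /ell E1 E2 /= lee_fin.
move=> h; apply: (le_trans h); rewrite distrC; exact: ler_norm.
Qed.

Lemma arcpar_rev g L s : curve dist g -> lenL g 0 1 = L%:E -> 0 <= s -> s <= L ->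
  arcpar dist (revc g) s = arcpar dist g (L - s).
Proof.
move=> cg HL s0 sL.
have HL' : lenL (revc g) 0 1 = L%:E by rewrite Lrev subrr subr0.
have [t [t0 t1 Et]] := ell_ivt (curve_rev cg) HL' s0 sL.
rewrite (arcpar_eq HL' t0 t1 Et) /revc.
have u0 : 0 <= 1 - t by lra.
have u1 : 1 - t <= 1 by lra.
apply/esym/(arcpar_eq HL u0 u1).
move: Et; rewrite Lrev subr0.
have := Ladd g u0 u1; rewrite HL.
have [a [Ea _ _]] := lenL_fin (lexx 0) u0 u1 HL.
have [b [Eb _ _]] := lenL_fin u0 u1 (lexx 1) HL.
rewrite Ea Eb -EFinD => -[->] -[->].
by congr EFin; ring.
Qed.

End Cont.

Section Reparam.
Context {R : realType} {X : pointedType} (dist : X -> X -> R).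
Hypothesis d0 : forall x y, 0 <= dist x y.
Hypothesis dsym : forall x y, dist x y = dist y x.
Hypothesis dtri : forall x y z, dist x z <= dist x y + dist y z.
Hypothesis dxx : forall x, dist x x = 0.
Hypothesis deq : forall x y, dist x y = 0 -> x = y.

Local Notation plen := (plen dist).
Local Notation lenL := (lenL dist).
Local Notation parts := (@parts R).
Let Ladd := @lenL_add R X dist dtri.
Let Lge0 := @lenL_ge0 R X dist d0.
Let Laa := @lenL_aa R X dist d0 dxx.
Let Lrev := @lenL_rev R X dist dsym.
Let Aeq := @arcpar_eq R X dist d0 dtri deq.
Let Alip := @arcpar_lip R X dist d0 dsym dtri dxx deq.
Let Ivt := @ell_ivt R X dist d0 dsym dtri dxx.
Let Lfin := @lenL_fin R X dist d0 dtri.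
Let Ldiff := @ell_diff R X dist d0 dtri.

Definition reparam (g : R -> X) := fun t : R => arcpar dist g (t * fine (len dist g)).

Lemma lenE g : len dist g = lenL g 0 1.
Proof. by rewrite /len len_onE. Qed.

Section G.
Variables (g : R -> X) (L : R).
Hypothesis cg : curve dist g.
Hypothesis HL : lenL g 0 1 = L%:E.

Let L0 : 0 <= L.
Proof. by have := Lge0 g ler01; rewrite HL lee_fin. Qed.

Let hE t : reparam g t = arcpar dist g (t * L).
Proof. by rewrite /reparam lenE HL. Qed.

Lemma reparam_lip s t : 0 <= s -> s <= 1 -> 0 <= t -> t <= 1 ->
  dist (reparam g s) (reparam g t) <= L * `|s - t|.
Proof.
move=> s0 s1 t0 t1; rewrite !hE.
rewrite -(ger0_norm L0) -normrM mulrBr (ger0_norm L0) [L * s]mulrC [L * t]mulrC.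
apply: (Alip cg HL).
all: try exact: mulr_ge0.
all: by rewrite -[X in _ <= X]mul1r ler_wpM2r.
Qed.

Lemma reparam0 : reparam g 0 = g 0.
Proof. by rewrite hE mul0r (Aeq HL (lexx 0) ler01) // Laa. Qed.

Lemma reparam1 : reparam g 1 = g 1.
Proof. by rewrite hE mul1r (Aeq HL ler01 (lexx 1)). Qed.

Let ell_mono a b : 0 <= a -> a <= b -> b <= 1 -> ell dist g a <= ell dist g b.
Proof.
move=> a0 ab b1; have := Lge0 g ab; rewrite (Ldiff a0 ab b1 HL) lee_fin.
by rewrite subr_ge0.
Qed.

Let ellE w : 0 <= w -> w <= 1 -> lenL g 0 w = (ell dist g w)%:E.
Proof.
move=> w0 w1; have [l [El _ _]] := Lfin (lexx 0) w0 w1 HL.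
by rewrite El /ell El.
Qed.

Lemma reparam_len t : 0 <= t -> t <= 1 -> lenL (reparam g) 0 t = (t * L)%:E.
Proof.
move=> t0 t1; apply/eqP; rewrite eq_le; apply/andP; split.
  have H : forall u v, 0 <= u -> u <= v -> v <= t ->
      dist (reparam g u) (reparam g v) <= L * (v - u).
    move=> u v u0 uv vt.
    have := reparam_lip u0 (le_trans uv (le_trans vt t1)) (le_trans u0 uv) (le_trans vt t1).
    by rewrite distrC ger0_norm ?subr_ge0.
  by have := lenL_lip t0 H; rewrite subr0 mulrC.
have [->|Lpos] := eqVneq L 0; first by rewrite mulr0 Lge0.
have Lp : 0 < L by rewrite lt_def Lpos L0.
have tL0 : 0 <= t * L by exact: mulr_ge0.
have tLL : t * L <= L by rewrite -[X in _ <= X]mul1r ler_wpM2r.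
have [u [u0 u1 Eu]] := Ivt cg HL tL0 tLL.
rewrite -Eu; apply: ge_ereal_sup => _ [s [ps ls] <-].
set phi := fun w => ell dist g w / L.
have phi0 : phi 0 = 0 by rewrite /phi /ell Laa mul0r.
have inb : forall w, w \in 0 :: s -> 0 <= w <= 1.
  move=> w; rewrite inE => /orP[/eqP ->|ws]; first by rewrite lexx ler01.
  have /andP[w0 wl] := path_bounds ps ws.
  by rewrite w0 (le_trans wl) // ls.
have mp : forall a s', 0 <= a -> path <=%R a s' -> last a s' <= 1 ->
    path <=%R (phi a) [seq phi w | w <- s'].
  move=> a s'; elim: s' a => [|y s' IH] a //= a0 /andP[ay py] l1.
  have y1 : y <= 1 := le_trans (path_le_last py) l1.
  rewrite IH ?(le_trans a0 ay) // andbT /phi ler_pM2r ?invr_gt0 //.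
  exact: ell_mono.
have Hp : parts 0 t [seq phi w | w <- s].
  split; first by rewrite -phi0; apply: mp => //; rewrite ls.
  rewrite -phi0 (last_map phi) ls /phi /ell Eu /= mulfK //.
apply: le_trans (lenL_ge_plen dist (reparam g) Hp); rewrite lee_fin.
have -> : plen (reparam g) 0 [seq phi w | w <- s] = plen (reparam g \o phi) 0 s.
  by rewrite -plen_map phi0.
rewrite le_eqVlt; apply/orP; left; apply/eqP.
apply: (@plen_eq _ _ dist) => w /inb /andP[w0 w1] /=.
rewrite hE /phi divfK //; apply/esym/(Aeq HL w0 w1).
exact: ellE.
Qed.

Lemma reparam_len1 : lenL (reparam g) 0 1 = L%:E.
Proof. by rewrite reparam_len ?ler01 // mul1r. Qed.

Lemma reparam_arcpar s : 0 <= s -> s <= L ->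
  arcpar dist (reparam g) s = arcpar dist g s.
Proof.
move=> s0 sL.
have [L0'|Lpos] := eqVneq L 0.
  have s00 : s = 0 by apply/eqP; rewrite eq_le s0 -L0' sL.
  rewrite s00 (Aeq reparam_len1 (lexx 0) ler01 (Laa _ 0)) reparam0.
  by rewrite (Aeq HL (lexx 0) ler01 (Laa _ 0)).
have Lp : 0 < L by rewrite lt_def Lpos L0.
have t0 : 0 <= s / L by rewrite divr_ge0.
have t1 : s / L <= 1 by rewrite ler_pdivrMr // mul1r.
rewrite (Aeq reparam_len1 t0 t1); last by rewrite reparam_len // divfK.
by rewrite hE divfK.
Qed.

Lemma reparam_line_int rho : line_int dist (reparam g) rho = line_int dist g rho.
Proof.
rewrite /line_int !lenE reparam_len1 HL /=.
apply: eq_integral => s; rewrite inE /= in_itv /= => /andP[s0 sL].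
by rewrite reparam_arcpar.
Qed.

Lemma reparam_lipc : lipschitz_curve dist (reparam g).
Proof.
exists L => s t /andP[s0 s1] /andP[t0 t1]; exact: reparam_lip.
Qed.

End G.
Lemma lip_pos g : lipschitz_curve dist g -> exists2 K, 0 < K &
  forall s t, 0 <= s <= 1 -> 0 <= t <= 1 -> dist (g s) (g t) <= K * `|s - t|.
Proof.
move=> [K HK]; exists (`|K| + 1); first by rewrite ltr_wpDl.
move=> s t sI tI; apply: le_trans (HK s t sI tI) _.
by rewrite ler_wpM2r // (le_trans (ler_norm K)) // lerDl.
Qed.

Lemma lip_curve g : lipschitz_curve dist g -> curve dist g.
Proof.
move=> /lip_pos [K K0 HK] t tI e e0.
exists (e / K); first by rewrite divr_gt0.
move=> s sI st; apply: le_lt_trans (HK s t sI tI) _.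
by rewrite mulrC -ltr_pdivlMr.
Qed.

Lemma lip_len g : lipschitz_curve dist g -> exists L, lenL g 0 1 = L%:E.
Proof.
move=> /lip_pos [K K0 HK].
have H : forall u v, 0 <= u -> u <= v -> v <= 1 -> dist (g u) (g v) <= K * (v - u).
  move=> u v u0 uv v1.
  have := HK v u; rewrite ger0_norm ?subr_ge0 // dsym; apply.
    by rewrite (le_trans u0 uv) v1.
  by rewrite u0 (le_trans uv v1).
have := lenL_lip ler01 H; have := Lge0 g ler01.
case: (lenL g 0 1) => [l| |] //; by exists l.
Qed.

Lemma lip_rev g : lipschitz_curve dist g -> lipschitz_curve dist (revc g).
Proof.
move=> [K HK]; exists K => s t /andP[s0 s1] /andP[t0 t1]; rewrite /revc.
have E : (1 - s) - (1 - t) = t - s by ring.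
rewrite distrC -E.
apply: HK; apply/andP; split; lra.
Qed.

End Reparam.

Section Reflect.
Context {R : realType}.
Local Open Scope ereal_scope.

Lemma reflect_int (L : R) (F : R -> \bar R) : measurable_fun `[0%R, L] F ->
  (forall s, 0 <= F s) ->
  \int[lebesgue_measure]_(s in `[0%R, L]) F (L - s)%R =
  \int[lebesgue_measure]_(s in `[0%R, L]) F s.
Proof.
move=> mF F0.
pose phi : measurableTypeR R -> measurableTypeR R := fun s => (L - s)%R.
have mphi : measurable_fun setT phi.
  by apply: measurable_funB => //; exact: measurable_cst.
have E : forall A, measurable A -> lebesgue_measure A = pushforward lebesgue_measure phi A.
  have := @lebesgue_measure_unique R (pushforward lebesgue_measure phi).
  apply => _ [[a b] _ <-] /=.
  rewrite /pushforward.
  have -> : phi @^-1` `]a, b]%classic = `[(L - b)%R, (L - a)%R[%classic.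
    apply/seteqP; split => x /=; rewrite /phi !in_itv /= => /andP[h1 h2]; apply/andP; split; lra.
  rewrite !lebesgue_measure_itv /= !lte_fin.
  have -> : (L - b < L - a)%R = (a < b)%R by rewrite ltrD2l ltrN2.
  case: ifP => // _; rewrite -!EFinD; congr EFin; ring.
rewrite [RHS](eq_measure_integral (pushforward lebesgue_measure phi)); last first.
  by move=> A mA _; exact: E.
rewrite ge0_integral_pushforward //.
have -> : phi @^-1` `[0%R, L]%classic = `[0%R, L]%classic.
  apply/seteqP; split => x /=; rewrite /phi !in_itv /= => /andP[h1 h2]; apply/andP; split; lra.
by [].
Qed.
End Reflect.

Section Meas.
Context {R : realType} {X : pointedType} (dist : X -> X -> R).

Lemma open_pre (a : R -> X) (L : R) (U : set X) :
  (forall s t, (0 <= s <= L)%R -> (0 <= t <= L)%R -> (dist (a s) (a t) <= `|s - t|)%R) ->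
  open_d dist U -> measurable (`[0%R, L]%classic `&` a @^-1` U).
Proof.
move=> Ha oU.
pose V := [set t : R | exists s, [/\ (0 <= s <= L)%R, U (a s) &
  exists2 r, (0 < r)%R & ball_d dist (a s) r `<=` U /\ (`|s - t| < r)%R]].
have oV : open V.
  rewrite openE => t [s [sI Us [r r0 [br st]]]].
  rewrite /interior; apply/nbhs_normP; exists (r - `|s - t|)%R => /=.
    by rewrite subr_gt0.
  move=> t' tt'; exists s; split => //; exists r => //; split => //.
  apply: le_lt_trans (ler_distD t s t') _.
  by move: tt'; rewrite distrC => h; rewrite -ltrBrDl.
have -> : `[0%R, L]%classic `&` a @^-1` U = `[0%R, L]%classic `&` V.
  apply/seteqP; split => t [tI]; rewrite /= in tI *.
    move=> Ut; split => //; have [r r0 br] := oU _ Ut.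
    exists t; split => //.
    by exists r => //; split => //; rewrite subrr normr0.
  move=> [s [sI Us [r r0 [br st]]]]; split => //; apply: br.
  rewrite /ball_d /=; exact: le_lt_trans (Ha s t sI tI) st.
apply: measurableI; first exact: measurable_itv.
exact: open_measurable.
Qed.

Lemma meas_comp (a : R -> X) (L : R) (rho : X -> \bar R) :
  borel_fun dist rho ->
  (forall s t, (0 <= s <= L)%R -> (0 <= t <= L)%R -> (dist (a s) (a t) <= `|s - t|)%R) ->
  measurable_fun `[0%R, L] (rho \o a).
Proof.
move=> br Ha _ B mB.
rewrite comp_preimage.
suff : borel_d dist `<=` [set A | measurable (`[0%R, L]%classic `&` a @^-1` A)].
  by apply; exact: br.
apply: smallest_sub; last by move=> U oU; exact: open_pre.
split.
- by rewrite /= preimage_set0 setI0.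
- move=> A mA; rewrite /= setTD preimage_setC.
  have -> : `[0%R, L]%classic `&` ~` (a @^-1` A) =
      `[0%R, L]%classic `\` (`[0%R, L]%classic `&` a @^-1` A).
    apply/seteqP; split => t /= [h1 h2]; split => //.
      by move=> [].
    by move=> h3; apply: h2.
  by apply: measurableD => //; exact: measurable_itv.
- move=> A mA; rewrite /= preimage_bigcup setI_bigcupr.
  by apply: bigcup_measurable => k _; exact: mA.
Qed.
End Meas.

Section LineRev.
Context {R : realType} {X : pointedType} (dist : X -> X -> R).
Hypothesis d0 : forall x y, 0 <= dist x y.
Hypothesis dsym : forall x y, dist x y = dist y x.
Hypothesis dtri : forall x y z, dist x z <= dist x y + dist y z.
Hypothesis dxx : forall x, dist x x = 0.
Hypothesis deq : forall x y, dist x y = 0 -> x = y.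
Let Lrev := @lenL_rev R X dist dsym.
Let Alip := @arcpar_lip R X dist d0 dsym dtri dxx deq.
Let Arev := @arcpar_rev R X dist d0 dsym dtri dxx deq.
Let Llen := @lip_len R X dist d0 dsym.

Lemma line_int_rev g rho : lipschitz_curve dist g -> borel_fun dist rho ->
  (forall x, (0 <= rho x)%E) ->
  line_int dist (revc g) rho = line_int dist g rho.
Proof.
move=> lg br r0.
have cg := lip_curve lg.
have [L HL] := Llen lg.
rewrite /line_int !lenE Lrev subrr subr0 HL /=.
transitivity (\int[lebesgue_measure]_(s in `[0%R, L]) (rho \o arcpar dist g) (L - s)%R)%E.
  apply: eq_integral => s; rewrite inE /= in_itv /= => /andP[s0 sL].
  by rewrite /= (Arev cg HL s0 sL).
apply: reflect_int; last by move=> s; exact: r0.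
apply: (meas_comp br) => s t /andP[s0 s1] /andP[t0 t1].
exact: (Alip cg HL).
Qed.
End LineRev.

Section Main.
Context {R : realType} {X : pointedType} (dist : X -> X -> R)
  (mu : {outer_measure set X -> \bar R}) (p : \bar R) (C : R).
Hypothesis Hp : (1 <= p)%E.
Hypothesis HC : 1 <= C.
Hypothesis Hm : metric_measure_space dist mu.
Hypothesis Ht : thick_quasiconvex dist mu p C.

Let Hmet : is_metric dist. Proof. by case: Hm. Qed.
Let d0 : forall x y, 0 <= dist x y. Proof. by case: Hmet. Qed.
Let dsym : forall x y, dist x y = dist y x. Proof. by case: Hmet. Qed.
Let dtri : forall x y z, dist x z <= dist x y + dist y z. Proof. by case: Hmet. Qed.
Let dxx : forall x, dist x x = 0. Proof. move=> x; case: Hmet => _ h _ _; exact: (h x x).2. Qed.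
Let deq : forall x y, dist x y = 0 -> x = y. Proof. move=> x y; case: Hmet => _ h _ _; exact: (h x y).1. Qed.

Local Notation Mod := (Mod dist mu p).
Local Notation essl := (essl dist mu p).

Let muT : (0 < mu [set: X])%E.
Proof.
have [_ _ _ Hb] := Hm; have /andP[h _] := Hb point 1 ltr01.
by apply: lt_le_trans h _; apply: le_outer_measure.
Qed.

Lemma Mod_ge0 Gam : (0 <= Mod Gam)%E.
Proof.
apply: le_ereal_inf_tmp => _ [rho [[r0 _ _] ->]].
case: ifP => _.
  have E0 : ess_sup (mu : set (caratheodory_type mu) -> \bar R) (cst 0%E) = 0%E.
    exact: ess_sup_cst.
  rewrite -E0; apply: le_ess_sup; apply: aeW => x; exact: r0.
by apply: integral_ge0 => x _; exact: poweR_ge0.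
Qed.

Lemma borel_cst (c : \bar R) : borel_fun dist (cst c).
Proof.
move=> B mB; rewrite preimage_cst; case: ifP => _.
  by move=> G [[G0 GC _] _]; have := GC set0 G0; rewrite setD0.
by move=> G [[G0 _ _] _].
Qed.

Lemma Mod_empty : Mod set0 = 0%E.
Proof.
apply/eqP; rewrite eq_le Mod_ge0 andbT; apply: ereal_inf_lbound.
exists (cst 0%E); split; first by split => //; exact: borel_cst.
case: ifP => hp; first by rewrite ess_sup_cst.
have pf : fine p != 0.
  move: hp Hp; case: p => [r| |] //= _; rewrite lee_fin => h.
  by rewrite gt_eqF // (lt_le_trans ltr01 h).
rewrite (eq_integral (cst 0%E)); first by rewrite integral0.
by move=> x _; rewrite /cst /=; apply: poweR0r.
Qed.

Lemma Mod_mono Gam Gam' : (forall rho, admissible dist Gam' rho -> admissible dist Gam rho) ->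
  (Mod Gam <= Mod Gam')%E.
Proof.
move=> H; apply: ereal_inf_le_tmp => _ [rho [ad ->]]; exists rho; split => //; exact: H.
Qed.

Lemma essl_anti Gam Gam' : Gam `<=` Gam' -> (essl Gam' <= essl Gam)%E.
Proof.
move=> sub; apply: ge_ereal_sup => _ [G0 [M0 ->]].
apply: le_trans (_ : ereal_inf [set len dist g | g in Gam `\` G0] <= _)%E.
  apply: ereal_inf_le_tmp => _ [g [gG gG0] <-]; exists g => //; split => //; exact: sub.
by apply: ereal_sup_ubound; exists G0.
Qed.

Lemma essl_ge_inf Gam : (ereal_inf [set len dist g | g in Gam] <= essl Gam)%E.
Proof.
apply: ereal_sup_ubound; exists set0; split; first exact: Mod_empty.
by rewrite setD0.
Qed.

Let Lge0 := @lenL_ge0 R X dist d0.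
Let Rli := @reparam_line_int R X dist d0 dsym dtri dxx deq.
Let Rlip := @reparam_lipc R X dist d0 dsym dtri dxx deq.
Let R0 := @reparam0 R X dist d0 dtri dxx deq.
Let R1 := @reparam1 R X dist d0 dtri deq.
Let Rlen := @reparam_len1 R X dist d0 dsym dtri dxx deq.

Lemma cball_borel x r : borel_d dist (cball_d dist x r).
Proof.
pose U := [set y | r < dist x y].
have oU : open_d dist U.
  move=> y Uy; exists (dist x y - r); first by rewrite subr_gt0.
  move=> z; rewrite /ball_d /U /= => yz.
  have := dtri x z y; rewrite (dsym z y); lra.
have -> : cball_d dist x r = setT `\` U.
  apply/seteqP; split => z /=; rewrite /cball_d /U /=.
    by move=> h; split => // h'; lra.
  by move=> [_ h]; rewrite leNgt; apply/negP.
by move=> M [[M0 MC MU] GM]; apply: MC; apply: GM.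
Qed.

Lemma cball_meas x r : 0 < r ->
  mu.-caratheodory (cball_d dist x r) /\ (0 < mu (cball_d dist x r))%E.
Proof.
move=> r0; have [_ _ [Hb _] Hpos] := Hm; split; first by apply: Hb; exact: cball_borel.
have /andP[h _] := Hpos x r r0; apply: lt_le_trans h _; apply: le_outer_measure.
by move=> z; rewrite /ball_d /cball_d /=; exact: ltW.
Qed.

Lemma fin_of (x : \bar R) (r : R) : (0 <= x)%E -> (x <= r%:E)%E -> exists L, x = L%:E.
Proof. by case: x => [l| |] //= _ _; exists l. Qed.

Lemma f_lower x y del : ((dist x y - 2 * del)%:E <=
  essl (GamL dist (cball_d dist x del) (cball_d dist y del)))%E.
Proof.
apply: le_trans (essl_ge_inf _); apply: le_ereal_inf_tmp => _ [g [lg g0 g1] <-].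
rewrite lenE; apply: le_trans (lenL_dist dist g ler01); rewrite lee_fin.
move: g0 g1; rewrite /cball_d /= => g0 g1.
have := dtri x (g 0) y; have := dtri (g 0) (g 1) y; rewrite (dsym (g 1) y); lra.
Qed.

Lemma GamC_fin E F g : GamC dist E F C g -> curve dist g /\ exists L, lenL dist g 0 1 = L%:E.
Proof.
move=> [cg _ _ hl]; split => //.
by apply: (fin_of (Lge0 g ler01)); rewrite -lenE; exact: hl.
Qed.

Lemma f_upper x y del : 0 < del ->
  (essl (GamL dist (cball_d dist x del) (cball_d dist y del)) <=
   (C * (dist x y + 2 * del))%:E)%E.
Proof.
move=> del0; apply: ge_ereal_sup => _ [G0 [M0 ->]].
set E := cball_d dist x del; set F := cball_d dist y del.
have [g [Hg nG]] : exists g, GamC dist E F C g /\ ~ G0 (reparam dist g).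
  case: (pselect (exists g, GamC dist E F C g /\ ~ G0 (reparam dist g))) => // Hn.
  have all : forall g, GamC dist E F C g -> G0 (reparam dist g).
    by move=> g Hg; apply: contrapT => nG; apply: Hn; exists g.
  have [cE mE] := cball_meas x del0; have [cF mF] := cball_meas y del0.
  have := Ht cE cF mE mF.
  have : (Mod (GamC dist E F C) <= Mod G0)%E.
    apply: Mod_mono => rho [r0 br H]; split => // g Hg.
    have [cg [L HL]] := GamC_fin Hg.
    by rewrite -(Rli cg HL); apply: H; exact: all.
  by rewrite M0 => h1 h2; have := lt_le_trans h2 h1; rewrite ltxx.
have [cg [L HL]] := GamC_fin Hg.
have [_ g0 g1 hl] := Hg.
have C0 : 0 <= C := le_trans ler01 HC.
apply: le_trans (_ : len dist (reparam dist g) <= _)%E.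
  apply: ereal_inf_lbound; exists (reparam dist g); last by [].
  split; last exact: nG.
  by split; [exact: (Rlip cg HL) | rewrite (R0 HL) | rewrite (R1 HL)].
rewrite lenE (Rlen cg HL) -HL -lenE; apply: le_trans hl _; rewrite lee_fin.
apply: ler_wpM2l => //.
move: g0 g1; rewrite /E /F /cball_d /= => g0 g1.
have := dtri (g 0) x (g 1); have := dtri x y (g 1); rewrite (dsym (g 0) x); lra.
Qed.

Definition fdel x y := fun del : R => essl (GamL dist (cball_d dist x del) (cball_d dist y del)).

Lemma fdel_noninc x y : {in Interval (BRight (0%R:R)) (BInfty R false) &,
  nonincreasing_fun (fdel x y)}.
Proof.
move=> a b _ _ ab; apply: essl_anti => g [lg g0 g1]; split => //.
  by move: g0; rewrite /cball_d /= => h; exact: le_trans h ab.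
by move: g1; rewrite /cball_d /= => h; exact: le_trans h ab.
Qed.

Lemma dp'E x y : dp' dist mu p x y =
  ereal_sup (fdel x y @` [set` Interval (BRight (0%R:R)) (BInfty R false)]).
Proof.
rewrite /dp'; apply: cvg_lim => //.
exact: (nonincreasing_at_right_cvge _ _ (fdel_noninc x y)).
Qed.

Lemma dp'_ge x y : ((dist x y)%:E <= dp' dist mu p x y)%E.
Proof.
rewrite dp'E; apply/lee_addgt0Pr => e e0.
have e2 : 0 < e / 2 by rewrite divr_gt0.
have h1 := f_lower x y (e / 2).
have h2 : (fdel x y (e / 2) <= ereal_sup (fdel x y @` [set` Interval (BRight (0%R:R)) (BInfty R false)]))%E.
  by apply: ereal_sup_ubound; exists (e / 2) => //=; rewrite in_itv /= e2.
have := leeD2r (e%:E) (le_trans h1 h2).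
by rewrite -EFinD (_ : dist x y - 2 * (e / 2) + e = dist x y) //; field.
Qed.

Lemma dp'_le x y : (dp' dist mu p x y <= (C * dist x y)%:E)%E.
Proof.
rewrite dp'E; apply: ge_ereal_sup => _ [del dI <-].
have del0 : 0 < del by move: dI; rewrite /= in_itv /= andbT.
apply/lee_addgt0Pr => e e0.
have C0 : 0 < C := lt_le_trans ltr01 HC.
set d' := Num.min del (e / (2 * C)).
have d'0 : 0 < d' by rewrite lt_min del0 divr_gt0 // mulr_gt0.
have d'del : d' <= del by rewrite ge_min lexx.
have d'e : d' * (2 * C) <= e.
  by rewrite -ler_pdivlMr ?mulr_gt0 // ge_min lexx orbT.
apply: le_trans (_ : fdel x y d' <= _)%E.
  by apply: fdel_noninc => //; rewrite in_itv /= d'0.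
apply: le_trans (f_upper x y d'0) _.
rewrite -EFinD lee_fin (_ : C * (dist x y + 2 * d') = C * dist x y + d' * (2 * C)).
  by rewrite lerD2l.
by ring.
Qed.

Let Lrev := @lenL_rev R X dist dsym.

Lemma essl_rev E F : (essl (GamL dist E F) <= essl (GamL dist F E))%E.
Proof.
apply: ge_ereal_sup => _ [G0 [M0 ->]].
pose G1 := [set g' | GamL dist F E g' /\ G0 (revc g')].
have M1 : Mod G1 = 0%E.
  apply/eqP; rewrite eq_le Mod_ge0 andbT -M0; apply: Mod_mono => rho [r0 br H].
  split => // g' [[lg' _ _] Gg'].
  by rewrite -(@line_int_rev R X dist d0 dsym dtri dxx deq g' rho lg' br r0); exact: H.
apply: le_trans (_ : ereal_inf [set len dist g | g in GamL dist F E `\` G1] <= _)%E.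
  apply: le_ereal_inf_tmp => _ [g' [[lg' g0 g1] nG1] <-].
  have -> : len dist g' = len dist (revc g').
    by rewrite !lenE Lrev subrr subr0.
  apply: ereal_inf_lbound; exists (revc g'); last by [].
  split.
    by split; [exact: lip_rev | rewrite /revc subr0 | rewrite /revc subrr].
  by move=> h; apply: nG1; split.
by apply: ereal_sup_ubound; exists G1.
Qed.

Lemma dp'_sym x y : dp' dist mu p x y = dp' dist mu p y x.
Proof.
have H : forall a b, (dp' dist mu p a b <= dp' dist mu p b a)%E.
  move=> a b; rewrite !dp'E; apply: ge_ereal_sup => _ [del dI <-].
  apply: le_trans (essl_rev _ _) _; apply: ereal_sup_ubound; exists del => //.
by apply/eqP; rewrite eq_le !H.
Qed.

Local Notation dpp := (dp' dist mu p).
Local Notation DP := (dp dist mu p).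

Lemma dp'_real x y : exists l, dpp x y = l%:E.
Proof.
apply: (fin_of _ (dp'_le x y)); apply: le_trans (dp'_ge x y); rewrite lee_fin; exact: d0.
Qed.

Lemma chain_ge n (xs : nat -> X) :
  ((dist (xs 0%N) (xs n))%:E <= \sum_(i < n) dpp (xs i) (xs i.+1))%E.
Proof.
elim: n => [|n IH]; first by rewrite big_ord0 dxx.
rewrite big_ord_recr /=; apply: le_trans (leeD IH (dp'_ge _ _)).
by rewrite -EFinD lee_fin dtri.
Qed.

Lemma dp_ge x y : ((dist x y)%:E <= DP x y)%E.
Proof.
apply: le_ereal_inf_tmp => _ [n [xs [n0 x0 xn ->]]].
by rewrite -x0 -xn; exact: chain_ge.
Qed.

Lemma dp_le' x y : (DP x y <= dpp x y)%E.
Proof.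
apply: ereal_inf_lbound; exists 1%N, (fun i => if i == 0%N then x else y).
by split => //; rewrite big_ord1.
Qed.

Lemma dp_le x y : (DP x y <= (C * dist x y)%:E)%E.
Proof. exact: le_trans (dp_le' x y) (dp'_le x y). Qed.

Lemma dp_real x y : exists l, DP x y = l%:E.
Proof.
apply: (fin_of _ (dp_le x y)); apply: le_trans (dp_ge x y); rewrite lee_fin; exact: d0.
Qed.

Lemma sum_rev n (F : nat -> \bar R) :
  (\sum_(i < n) F i = \sum_(i < n) F (n - i.+1)%N)%E.
Proof.
by rewrite -(big_mkord xpredT F) big_rev_mkord subn0.
Qed.

Lemma dp_sym_le x y : (DP y x <= DP x y)%E.
Proof.
apply: ereal_inf_le_tmp => _ [n [xs [n0 x0 xn ->]]].
exists n, (fun i => xs (n - i)%N); split => //.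
- by rewrite subn0.
- by rewrite subnn.
rewrite (sum_rev n (fun i => dpp (xs i) (xs i.+1))).
apply: eq_bigr => i _ /=.
by rewrite subnSK // dp'_sym.
Qed.

Lemma dp_sym x y : DP x y = DP y x.
Proof. by apply/eqP; rewrite eq_le !dp_sym_le. Qed.


Lemma dp_tri x y z : (DP x z <= DP x y + DP y z)%E.
Proof.
have [a Ea] := dp_real x y; have [b Eb] := dp_real y z.
rewrite Ea Eb; apply/lee_addgt0Pr => e e0.
have e2 : 0 < e / 2 by rewrite divr_gt0.
have : (DP x y < (a + e / 2)%:E)%E by rewrite Ea lte_fin; lra.
move/ereal_inf_lt => [_ [n1 [xs [n10 x0 xn1 ->]]] h1].
have : (DP y z < (b + e / 2)%:E)%E by rewrite Eb lte_fin; lra.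
move/ereal_inf_lt => [_ [n2 [ys [n20 y0 yn2 ->]]] h2].
pose zs := fun i => if (i <= n1)%N then xs i else ys (i - n1)%N.
have zs_r : forall j, zs (n1 + j)%N = ys j.
  move=> [|j]; first by rewrite /zs addn0 leqnn xn1 y0.
  by rewrite /zs addnS ltnNge leq_addr /= -addnS addKn.
have Hz : (DP x z <= \sum_(i < n1 + n2) dpp (zs i) (zs i.+1))%E.
  apply: ereal_inf_lbound; exists (n1 + n2)%N, zs.
  split; [by rewrite addn_gt0 n10 | by rewrite /zs /= x0 | by rewrite zs_r | by []].
have Hsum : (\sum_(i < n1 + n2) dpp (zs i) (zs i.+1) =
    \sum_(i < n1) dpp (xs i) (xs i.+1) + \sum_(i < n2) dpp (ys i) (ys i.+1))%E.
  rewrite big_split_ord; congr (_ + _)%E; apply: eq_bigr => i _ /=.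
    by rewrite /zs (ltnW (ltn_ord i)) (ltn_ord i).
  by rewrite -addnS !zs_r.
apply: le_trans Hz _; rewrite Hsum; apply: ltW; apply: lt_le_trans (lteD h1 h2) _.
by rewrite -!EFinD lee_fin; lra.
Qed.

Theorem main_result : is_metric_e DP /\
  (forall x y : X, ((dist x y)%:E <= DP x y)%E /\ (DP x y <= (C * dist x y)%:E)%E).
Proof.
split; last by move=> x y; split; [exact: dp_ge | exact: dp_le].
split.
- by move=> x y; have [l ->] := dp_real x y.
- by move=> x y; apply: le_trans (dp_ge x y); rewrite lee_fin.
- move=> x y; split.
    move=> h; apply: deq; apply/eqP; rewrite eq_le d0 andbT.
    by have := dp_ge x y; rewrite h lee_fin.
  move=> <-; apply/eqP; rewrite eq_le.
  have := dp_le x x; rewrite dxx mulr0 => ->.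
  by have := dp_ge x x; rewrite dxx.
- exact: dp_sym.
- exact: dp_tri.
Qed.

End Main.

Theorem lemma5p8 (R : realType) (X : pointedType) (dist : X -> X -> R)
    (mu : {outer_measure set X -> \bar R}) (p : \bar R) (C : R) :
  (1 <= p)%E -> 1 <= C ->
  metric_measure_space dist mu ->
  thick_quasiconvex dist mu p C ->
  is_metric_e (dp dist mu p) /\
  (forall x y : X, ((dist x y)%:E <= dp dist mu p x y)%E /\
                   (dp dist mu p x y <= (C * dist x y)%:E)%E).
Proof.
move=> Hp HC Hm Ht; exact: (main_result Hp HC Hm Ht).
Qed.
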